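(* Let $q=p^m$ be a prime power with $p$ prime, let $3\le h\le k$ be integers, and $$D_3=\Bigl\{(x_1,\ldots,x_k)\in\mathbb{F}_q^k\setminus\{0\}:\prod_{i=1}^h x_i\prod_{1\le i<j\le h}(x_i+x_j)=0\Bigr\}.$$ Let $$\Gamma(h,q)=\sum_{s=1}^{\min(h,(q-1)/2)}\frac{(q-1)(q-3)\cdots(q-2s+1)}{s!}\,\mathcal{S}(h,s),$$ where $\mathcal{S}(x,y)$ is the number of surjective functions from a set of size $x$ onto a set of size $y\le x$. Then the length $\#D_3$ of the code $\mathrm{C}_{D_3}$ equals $q^{k-h}\bigl(q^h-(q-1)(q-2)\cdots(q-h)\bigr)-1$ if $p=2$ and $h\le q+1$; $q^k-1$ if $p=2$ and $h>q+1$; and $q^{k-h}\bigl(q^h-\Gamma(h,q)\bigr)-1$ if $p>2$.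
   Context: For a finite set $D=\{P_1,\ldots,P_n\}\subseteq\mathbb{F}_q^k$, $\mathrm{C}_D=\{(f(P_1),\ldots,f(P_n)):f:\mathbb{F}_q^k\to\mathbb{F}_q\text{ linear}\}$, a code of length $n=\#D$. *)

(* Defs.v *)
From HB Require Import structures.
From mathcomp Require Import all_boot all_order all_algebra all_field.
Set Implicit Arguments. Unset Strict Implicit. Unset Printing Implicit Defensive.
Import Order.TTheory GRing.Theory Num.Theory.
Local Open Scope ring_scope.

(* The defining set D_3 of the code C_{D_3}: nonzero vectors x in F^k with
   prod_{i<=h} x_i * prod_{1<=i<j<=h} (x_i + x_j) = 0.  Coordinates are
   indexed from 0, so "first h coordinates" = indices i with i < h. *)
Definition D3 (F : finFieldType) (k h : nat) : {set 'rV[F]_k} :=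
  [set x : 'rV[F]_k | (x != 0) &&
     ((\prod_(i < k | (i < h)%N) x 0 i) *
      (\prod_(i < k) \prod_(j < k | (i < j)%N && (j < h)%N) (x 0 i + x 0 j))
      == 0)].

Definition nsurj (x y : nat) : nat :=
  #|[set f : {ffun 'I_x -> 'I_y} | [forall b, exists a, f a == b]]|.

Definition Gamma (h q : nat) : rat :=
  \sum_(1 <= s < (minn h ((q - 1) %/ 2)).+1)
     ((\prod_(i < s) ((q%:Q) - (2 * i + 1)%:R)) / (s`!)%:R) * (nsurj h s)%:R.

(* Main.v *)
Require Import Defs.
From HB Require Import structures.
From mathcomp Require Import all_boot all_order all_algebra all_field zify ring.
Set Implicit Arguments. Unset Strict Implicit. Unset Printing Implicit Defensive.
Import Order.TTheory GRing.Theory Num.Theory.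
Local Open Scope ring_scope.

Lemma card_bij (T U : finType) (A : {set T}) (B : {set U}) (f : T -> U) (g : U -> T) :
  {in A, forall x, f x \in B} -> {in B, forall y, g y \in A} ->
  {in A, cancel f g} -> {in B, cancel g f} -> #|A| = #|B|.
Proof.
move=> fA gB fK gK; apply/eqP; rewrite eqn_leq; apply/andP; split.
  rewrite -(card_in_imset (can_in_inj fK)); apply: subset_leq_card.
  by apply/subsetP=> y /imsetP[x xA ->]; apply: fA.
rewrite -(card_in_imset (can_in_inj gK)); apply: subset_leq_card.
by apply/subsetP=> y /imsetP[x xA ->]; apply: gB.
Qed.

Definition good (F : finFieldType) h (f : {ffun 'I_h -> F}) : bool :=
  (\prod_(i < h) f i) * (\prod_(i < h) \prod_(j < h | (i < j)%N) (f i + f j)) != 0.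

Lemma prod_split (F : finFieldType) h l (x : 'rV[F]_(h + l)) :
  ((\prod_(i < h + l | (i < h)%N) x 0 i) *
      (\prod_(i < h + l) \prod_(j < h + l | (i < j)%N && (j < h)%N) (x 0 i + x 0 j)))
  = (\prod_(i < h) x 0 (lshift l i)) *
     \prod_(i < h) \prod_(j < h | (i < j)%N) (x 0 (lshift l i) + x 0 (lshift l j)).
Proof.
  have -> : \prod_(i < h + l | (i < h)%N) x 0 i = \prod_(i < h) x 0 (lshift l i).
    rewrite big_split_ord /= [X in _ * X]big_pred0; last by move=> j /=; lia.
    by rewrite mulr1; apply: eq_bigl => i; rewrite ltn_ord.
  congr (_ * _).
    rewrite big_split_ord /= [X in _ * X]big1; last first.
      move=> i _; apply: big_pred0 => j /=; apply/negbTE; rewrite negb_and -leqNgt.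
      lia.
    rewrite mulr1; apply: eq_bigr => i _.
    rewrite big_split_ord /= [X in _ * X]big_pred0; last by move=> j /=; lia.
    by rewrite mulr1; apply: eq_bigl => j; rewrite ltn_ord andbT.
Qed.

Lemma cardG (F : finFieldType) h l :
  #|[set x : 'rV[F]_(h + l) | ((\prod_(i < h + l | (i < h)%N) x 0 i) *
      (\prod_(i < h + l) \prod_(j < h + l | (i < j)%N && (j < h)%N) (x 0 i + x 0 j))) != 0]|
  = (#|[set f : {ffun 'I_h -> F} | good f]| * #|F| ^ l)%N.
Proof.
have -> : (#|F| ^ l = #|[set: {ffun 'I_l -> F}]|)%N by rewrite cardsT card_ffun card_ord.
rewrite -cardsX.
apply: (@card_bij _ _ _ _ (fun x : 'rV[F]_(h + l) => ([ffun i => x 0 (lshift l i)], [ffun j => x 0 (rshift h j)]))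
   (fun fg => row_mx (\row_i fg.1 i) (\row_j fg.2 j))).
- move=> x; rewrite !inE andbT prod_split.
  rewrite /good /= => H.
  under eq_bigr do rewrite ffunE.
  by under [X in _ * X]eq_bigr => i _ do under eq_bigr => j _ do rewrite !ffunE.
- case=> f g; rewrite !inE andbT => gf.
  rewrite prod_split; move: gf; rewrite /good /=.
  move=> H; under eq_bigr do rewrite row_mxEl mxE; by under [X in _ * X]eq_bigr => i _ do under eq_bigr => j _ do rewrite !row_mxEl !mxE.
- move=> x _ /=; rewrite -[RHS]hsubmxK; congr row_mx; apply/rowP => j; rewrite !mxE ffunE.
  + by [].
  + by [].
- case=> f g _ /=; congr pair; apply/ffunP => i; rewrite ffunE.
  + by rewrite row_mxEl mxE.
  + by rewrite row_mxEr mxE.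
Qed.

Lemma cardD3 (F : finFieldType) k h : (0 < h)%N -> (h <= k)%N ->
  (#|D3 F k h| + 1 + #|[set f : {ffun 'I_h -> F} | good f]| * #|F| ^ (k - h) = #|F| ^ k)%N.
Proof.
move=> h0 hk; have [l ->] : exists l, k = (h + l)%N by exists (k - h)%N; rewrite subnKC.
rewrite addKn -cardG.
set G := [set x : 'rV[F]_(h + l) | _].
have -> : D3 F (h + l) h = ~: (G :|: [set 0]).
  by apply/setP => x; rewrite !inE negb_or negbK andbC.
have G0 : (0 : 'rV[F]_(h + l)) \notin G.
  rewrite inE negbK prod_split.
  under eq_bigr do rewrite mxE.
  by rewrite prodr_const card_ord expr0n eqn0Ngt h0 mul0r.
have := cardsC (G :|: [set 0]); rewrite setUC cardsU1 G0 card_mx mul1n.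
move=> H; rewrite -H /= addn1 addSn add1n addSn addnC. done.
Qed.

Lemma goodP (F : finFieldType) h (f : {ffun 'I_h -> F}) :
  reflect ((forall i : 'I_h, f i != 0) /\ (forall i j : 'I_h, (i < j)%N -> f i + f j != 0)) (good f).
Proof.
rewrite /good mulf_eq0 negb_or.
apply: (iffP andP) => [[/prodf_neq0 H1 /prodf_neq0 H2] | [H1 H2]]; split.
- by move=> i; apply: H1.
- by move=> i j ij; move/prodf_neq0: (H2 i isT); apply.
- by apply/prodf_neq0 => i _; apply: H1.
- by apply/prodf_neq0 => i _; apply/prodf_neq0 => j; apply: H2.
Qed.

Lemma N_char2 (F : finFieldType) h : 2 \in [char F] ->
  #|[set f : {ffun 'I_h -> F} | good f]| = (#|F|.-1 ^_ h)%N.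
Proof.
move=> c2.
have -> : [set f : {ffun 'I_h -> F} | good f] = [set f in ffun_on (predC1 0) | injectiveb f].
  apply/setP => f; rewrite !inE; apply/goodP/andP => [[H1 H2] | [/ffun_onP H1 /injectiveP H2]]; split.
  - by apply/ffun_onP => i; rewrite inE; apply: H1.
  - apply/injectiveP => i j fij; apply/eqP; case: (ltngtP i j) => // ij.
    + by move: (H2 _ _ ij); rewrite fij addrr_pchar2 ?eqxx.
    + by move: (H2 _ _ ij); rewrite fij addrr_pchar2 ?eqxx.
    + by apply/eqP/val_inj.
  - by move=> i; move: (H1 i); rewrite inE.
  - move=> i j ij; rewrite addr_eq0 oppr_pchar2 //; apply/eqP => /H2 e.
    by move: ij; rewrite e ltnn.
by rewrite card_inj_ffuns_on cardC1 card_ord.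
Qed.

Definition goodset (F : finFieldType) (A : {set F}) : bool :=
  (0 \notin A) && [forall x in A, - x \notin A].

Lemma goodsetP (F : finFieldType) (A : {set F}) :
  reflect (0 \notin A /\ forall x, x \in A -> - x \notin A) (goodset A).
Proof.
apply: (iffP andP) => [[H1 /forall_inP H2] | [H1 H2]]; split => //.
by apply/forall_inP.
Qed.

Definition absP (F : finFieldType) (P : {set F}) (x : F) := if x \in P then x else - x.

Lemma count_goodsets (F : finFieldType) (P : {set F}) (P0 : 0 \notin P)
  (Pn : forall x, x != 0 -> (- x \in P) = (x \notin P)) s :
  #|[set A : {set F} | goodset A && (#|A| == s)]| = (2 ^ s * 'C(#|P|, s))%N.
Proof.
have absin : forall x, x != 0 -> absP P x \in P.
  by move=> x x0; rewrite /absP; case: ifP => // /negbT; rewrite -Pn.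
have Pnz : forall x, x \in P -> x != 0 by move=> x xP; apply: contraNneq P0 => <-.
set D := [set BT : {set F} * {set F} | [&& BT.1 \subset P, BT.2 \subset BT.1 & #|BT.1| == s]].
have cardD : #|D| = (2 ^ s * 'C(#|P|, s))%N.
  rewrite -sum1_card.
  rewrite (eq_bigl (fun BT : {set F} * {set F} => ((BT.1 \subset P) && (#|BT.1| == s)) && (BT.2 \subset BT.1))); last first.
    by move=> BT; rewrite inE; case: (BT.1 \subset P); case: (BT.2 \subset BT.1); case: (#|BT.1| == s).
  rewrite -(pair_big_dep (fun B : {set F} => (B \subset P) && (#|B| == s)) (fun B (T : {set F}) => T \subset B) (fun _ _ => 1%N)) /=.
  rewrite (eq_bigr (fun _ => 2 ^ s)%N); last first.
    move=> B /andP[_ /eqP <-]; rewrite -card_powerset -sum1_card.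
    by apply: eq_bigl => T; rewrite powersetE.
  rewrite (eq_bigl (fun B => B \in [set B : {set F} | B \subset P & #|B| == s])); last by move=> B; rewrite inE.
  by rewrite sum_nat_const cards_draws mulnC.
rewrite -cardD.
have absP_in : forall x, x \in P -> absP P x = x by move=> x xP; rewrite /absP xP.
have absP_out : forall x, x \notin P -> absP P x = - x by move=> x xP; rewrite /absP (negbTE xP).
have nPn : forall x, x \in P -> - x \notin P by move=> x xP; rewrite Pn ?Pnz // negbK.
have oppP : forall x, x \notin P -> x != 0 -> - x \in P by move=> x xP x0; rewrite Pn.
pose Psi (A : {set F}) := ([set absP P x | x in A], [set x in P | - x \in A]).
pose Phi (BT : {set F} * {set F}) := (BT.1 :\: BT.2) :|: [set - x | x in BT.2].
have G1 : forall B T : {set F}, B \subset P -> T \subset B -> goodset (Phi (B, T)).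
  move=> B T /subsetP BP /subsetP TB; apply/goodsetP; split.
    apply/negP => /setUP[/setDP[/BP] | /imsetP[t /TB /BP tP e]]; first by rewrite (negbTE P0).
    by move: tP; rewrite -[t]opprK -e oppr0 (negbTE P0).
  move=> x /setUP[/setDP[xB xT] | /imsetP[t tT ->]]; apply/negP => /setUP[H | H].
  - by case/setDP: H => /BP; rewrite (negbTE (nPn _ (BP _ xB))).
  - by case/imsetP: H => t tT /oppr_inj e; move: xT; rewrite e tT.
  - by move: H; rewrite opprK => /setDP[_]; rewrite tT.
  - case/imsetP: H => t' t'T; rewrite opprK => e.
    by move: (nPn _ (BP _ (TB _ t'T))); rewrite -e (BP _ (TB _ tT)).
have K2 : forall B T : {set F}, B \subset P -> T \subset B -> Psi (Phi (B, T)) = (B, T).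
  move=> B T /subsetP BP /subsetP TB; congr pair; apply/setP => y.
    apply/imsetP/idP => [[x /setUP[/setDP[xB xT] | /imsetP[t tT ->]] ->] | yB].
    + by rewrite absP_in ?BP.
    + by rewrite absP_out ?opprK ?TB // nPn // BP ?TB.
    case: (boolP (y \in T)) => yT.
      exists (- y); last by rewrite absP_out ?opprK // nPn // BP.
      by apply/setUP; right; apply/imsetP; exists y.
    exists y; last by rewrite absP_in ?BP.
    by apply/setUP; left; apply/setDP.
  rewrite [y \in _]inE; apply/andP/idP => [[yP /setUP[/setDP[/BP] | /imsetP[t tT /oppr_inj ->]]] // | yT].
    by rewrite (negbTE (nPn _ yP)).
  split; first by rewrite BP ?TB.
  by apply/setUP; right; apply/imsetP; exists y.
have K1 : forall A, goodset A -> Phi (Psi A) = A.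
  move=> A /goodsetP[A0 Ag]; apply/setP => y; apply/idP/idP.
    case/setUP => [/setDP[/imsetP[x xA ->]] | /imsetP[t]].
      case: (boolP (x \in P)) => xP; first by rewrite absP_in.
      have x0 : x != 0 by apply: contraNneq A0 => <-.
      by rewrite absP_out // inE opprK xA oppP.
    by rewrite inE => /andP[_ ?] ->.
  move=> yA; have y0 : y != 0 by apply: contraNneq A0 => <-.
  case: (boolP (y \in P)) => yP.
    apply/setUP; left; apply/setDP; split; first by apply/imsetP; exists y; rewrite ?absP_in.
    by rewrite inE (negbTE (Ag _ yA)) andbF.
  apply/setUP; right; apply/imsetP; exists (- y); last by rewrite opprK.
  by rewrite inE oppP // opprK yA.
have G2a : forall A, goodset A -> (Psi A).1 \subset P.
  move=> A /goodsetP[A0 _]; apply/subsetP => y /imsetP[x xA ->]; apply: absin.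
  by apply: contraNneq A0 => <-.
have G2b : forall A, goodset A -> (Psi A).2 \subset (Psi A).1.
  move=> A _; apply/subsetP => y; rewrite inE => /andP[yP yA].
  by apply/imsetP; exists (- y); rewrite // absP_out ?opprK ?nPn.
have C : forall A, goodset A -> #|(Psi A).1| = #|A|.
  move=> A /goodsetP[A0 Ag]; apply: card_in_imset => x y xA yA.
  case: (boolP (x \in P)) => xP; case: (boolP (y \in P)) => yP.
  - by rewrite !absP_in.
  - by rewrite absP_in // absP_out // => e; move: (Ag _ yA); rewrite -e xA.
  - by rewrite absP_out // absP_in // => e; move: (Ag _ xA); rewrite e yA.
  - by rewrite !absP_out // => /oppr_inj.
apply: (card_bij (f := Psi) (g := Phi)).
- move=> A; rewrite !inE => /andP[gA /eqP sA].
  by rewrite G2a // G2b // C // sA eqxx.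
- case=> B T; rewrite !inE /= => /and3P[BP TB /eqP sB].
  have gP := G1 _ _ BP TB.
  by rewrite gP /= -C // K2 // sB.
- by move=> A; rewrite inE => /andP[gA _]; apply: K1.
- by case=> B T; rewrite inE /= => /and3P[BP TB _]; apply: K2.
Qed.


Lemma two_neq (F : finFieldType) (t2 : (2%:R : F) != 0) (x : F) : x != 0 -> - x != x.
Proof.
move=> x0; apply/eqP => e; move/eqP: x0; apply.
have : x + x = 0 by rewrite -{1}e addNr.
by rewrite -mulr2n -mulr_natl => /eqP; rewrite mulf_eq0 (negbTE t2) /= => /eqP.
Qed.

Lemma exP (F : finFieldType) (t2 : (2%:R : F) != 0) :
  exists P : {set F}, [/\ 0 \notin P, forall x, x != 0 -> (- x \in P) = (x \notin P)
     & #|F| = (#|P| + #|P|).+1].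
Proof.
pose P := [set x : F | (x != 0) && (enum_rank x < enum_rank (- x))%N].
have P0 : 0 \notin P by rewrite inE eqxx.
have Pn : forall x, x != 0 -> (- x \in P) = (x \notin P).
  move=> x x0; rewrite !inE oppr_eq0 x0 opprK /=.
  have ne : enum_rank (- x) != enum_rank x.
    by apply: contra (two_neq t2 x0) => /eqP /enum_rank_inj ->.
  by rewrite ltn_neqAle ne /= leqNgt.
exists P; split => //.
transitivity (#|P| + #|~: P|)%N; first exact: (esym (cardsC P)).
have -> : ~: P = 0 |: [set - x | x in P].
  apply/setP => y; rewrite in_setC in_setU1.
  case: (eqVneq y 0) => [-> | y0] //=.
  apply/idP/imsetP => [yP | [x xP ->]].
    by exists (- y); rewrite ?opprK // Pn.
  by rewrite Pn ?negbK //; apply: contraNneq P0 => <-.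
rewrite cardsU1 card_imset; last exact: oppr_inj.
have -> : (0 : F) \notin [set - x | x in P].
  by apply/imsetP => -[x xP] /eqP; rewrite eq_sym oppr_eq0 => /eqP e; move: xP; rewrite e (negbTE P0).
by rewrite add1n addnS.
Qed.

Lemma nsurj0 h : (0 < h)%N -> nsurj h 0 = 0%N.
Proof.
move=> h0; apply/eqP; rewrite cards_eq0; apply/eqP/setP => f; rewrite inE in_set0.
by case: (f (Ordinal h0)).
Qed.

Lemma nsurj_big h s : (h < s)%N -> nsurj h s = 0%N.
Proof.
move=> hs; apply/eqP; rewrite cards_eq0; apply/eqP/setP => f; rewrite inE in_set0.
apply/negP => /forallP surj.
have : [set: 'I_s] \subset [set f a | a : 'I_h].
  by apply/subsetP => b _; case/existsP: (surj b) => a /eqP <-; apply: imset_f.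
move/subset_leq_card; rewrite cardsT card_ord => H.
have := leq_trans H (leq_imset_card _ _); rewrite card_ord => H2.
by move: (leq_trans hs H2); rewrite ltnn.
Qed.

Lemma card_im (F : finFieldType) h (h0 : (0 < h)%N) (A : {set F}) :
  #|[set f : {ffun 'I_h -> F} | [set f i | i : 'I_h] == A]| = nsurj h #|A|.
Proof.
case: (set_0Vmem A) => [-> | [x0 x0A]].
  rewrite cards0 nsurj0 //; apply/eqP; rewrite cards_eq0; apply/eqP/setP => f.
  rewrite !inE; apply/negP => /eqP e.
  have : f (Ordinal h0) \in [set f i | i : 'I_h] by apply/imsetP; exists (Ordinal h0).
  by rewrite e inE.
apply: (card_bij (f := fun f : {ffun 'I_h -> F} => [ffun i => enum_rank_in x0A (f i)])
                 (g := fun g : {ffun 'I_h -> 'I_#|A|} => [ffun i => enum_val (g i)])).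
- move=> f; rewrite !inE => /eqP e; apply/forallP => b; apply/existsP.
  have : enum_val b \in [set f i | i : 'I_h] by rewrite e enum_valP.
  by case/imsetP => a _ ea; exists a; rewrite ffunE -ea enum_valK_in.
- move=> g; rewrite !inE => /forallP surj; apply/eqP/setP => y; apply/imsetP/idP.
    by case=> a _ ->; rewrite ffunE enum_valP.
  move=> yA; case/existsP: (surj (enum_rank_in x0A y)) => a /eqP ea.
  by exists a => //; rewrite ffunE ea enum_rankK_in.
- move=> f; rewrite !inE => /eqP e; apply/ffunP => i; rewrite !ffunE enum_rankK_in //.
  by rewrite -e; apply: imset_f.
- by move=> g _; apply/ffunP => i; rewrite !ffunE enum_valK_in.
Qed.

Lemma good_im (F : finFieldType) (t2 : (2%:R : F) != 0) h (f : {ffun 'I_h -> F}) :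
  good f = goodset [set f i | i : 'I_h].
Proof.
have imf : forall j, f j \in [set f i | i : 'I_h] by move=> j; apply/imsetP; exists j.
apply/goodP/goodsetP => [[H1 H2] | [H1 H2]]; split.
- by apply/imsetP => -[i _ /esym/eqP]; apply/negP; apply: H1.
- move=> x /imsetP[i _ ->]; apply/imsetP => -[j _ /eqP].
  rewrite eq_sym -addr_eq0; case: (ltngtP i j) => ij.
  + by rewrite addrC; apply/negP; apply: H2.
  + by apply/negP; apply: H2.
  + have -> : j = i by apply: val_inj.
    rewrite -mulr2n -mulr_natl mulf_eq0 (negbTE t2) /=; apply/negP; apply: H1.
- by move=> i; apply: contraNneq H1 => <-; apply: imf.
- move=> i j _; rewrite addr_eq0; apply/eqP => e.
  by move: (H2 _ (imf j)); rewrite -e imf.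
Qed.

Lemma N_odd (F : finFieldType) (t2 : (2%:R : F) != 0) h (h0 : (0 < h)%N) :
  #|[set f : {ffun 'I_h -> F} | good f]| =
  (\sum_(s < #|F|.+1) #|[set A : {set F} | goodset A && (#|A| == s)]| * nsurj h s)%N.
Proof.
rewrite -sum1_card.
rewrite (eq_bigl (fun f : {ffun 'I_h -> F} => goodset [set f i | i : 'I_h])); last first.
  by move=> f; rewrite inE good_im.
rewrite (partition_big (fun f : {ffun 'I_h -> F} => [set f i | i : 'I_h]) (@goodset F)) //=.
rewrite (eq_bigr (fun A : {set F} => nsurj h #|A|)); last first.
  move=> A gA; rewrite -card_im // -sum1_card; apply: eq_bigl => f.
  by rewrite inE; case: eqP => [-> | _]; rewrite ?gA ?andbF.
rewrite (partition_big (fun A : {set F} => (inord #|A| : 'I_#|F|.+1)) xpredT) //=.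
apply: eq_bigr => s _.
rewrite -sum_nat_const; apply: eq_big => A.
  rewrite inE; congr andb; rewrite -(inj_eq val_inj) /= inordK //.
  by rewrite ltnS max_card.
by case/andP => _ /eqP <-; rewrite inordK // ltnS max_card.
Qed.

Lemma ffact_rat n m : (0 < n)%N ->
  ((n.-1 ^_ m)%:R : rat) = \prod_(i < m) (n%:R - (i.+1)%:R).
Proof.
move=> n0; elim: m => [|m IH]; first by rewrite big_ord0 ffactn0.
rewrite big_ord_recr /= -IH ffactnSr natrM.
case: (leqP m.+1 n) => mn.
  have -> : (n.-1 - m = n - m.+1)%N by lia.
  by rewrite natrB.
by rewrite ffact_small ?mul0r //; lia.
Qed.

Lemma gamma_term n q s : q = (n + n).+1 ->
  (\prod_(i < s) ((q%:R : rat) - (2 * i + 1)%:R)) / (s`!)%:R = (2 ^ s * 'C(n, s))%:R.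
Proof.
move=> ->.
have H : \prod_(i < s) (((n + n).+1%:R : rat) - (2 * i + 1)%:R) = (2 ^ s * n ^_ s)%:R.
  elim: s => [|s IH]; first by rewrite big_ord0 ffactn0.
  rewrite big_ord_recr /= IH ffactnSr expnS.
  case: (leqP s n) => sn.
    have -> : (((n + n).+1)%:R : rat) - (2 * s + 1)%:R = 2 * (n%:R - s%:R).
      by rewrite -addn1 !natrD ?natrM; ring.
    by rewrite !natrM natrB //; ring.
  by rewrite (ffact_small sn) !muln0 !mul0r ?mul0n ?muln0.
rewrite H -bin_ffact mulnA natrM mulfK //.
by rewrite pnatr_eq0 -lt0n fact_gt0.
Qed.

Lemma gamma_sum h n q : (0 < h)%N -> q = (n + n).+1 ->
  Gamma h q = ((\sum_(s < q.+1) 2 ^ s * 'C(n, s) * nsurj h s)%N)%:R.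
Proof.
move=> h0 qn.
have M : ((q - 1) %/ 2 = n)%N by rewrite qn subn1 /= addnn divn2 doubleK.
rewrite /Gamma M natr_sum.
rewrite -pmulrn.
pose T s := ((2 ^ s * 'C(n, s) * nsurj h s)%N%:R : rat).
rewrite (eq_bigr T); last by move=> s _; rewrite /T [in RHS]natrM -(gamma_term s qn).
rewrite -(big_mkord xpredT T).
have T0 : T 0%N = 0 by rewrite /T nsurj0 // muln0.
rewrite [in RHS]big_ltn // T0 add0r.
rewrite [in RHS](@big_cat_nat _ _ _ (minn h n).+1) //=; last by rewrite qn; lia.
rewrite [X in _ = _ + X]big_nat_cond [X in _ = _ + X]big1 ?addr0 //.
move=> s /andP[/andP[Ms _] _]; rewrite /T.
case: (leqP s h) => sh.
  have ns : (n < s)%N by move: Ms; lia.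
  by rewrite bin_small // muln0 mul0n.
by rewrite nsurj_big // muln0.
Qed.

Theorem proposition4p1 (F : finFieldType) (p m h k : nat)
  (hp : prime p) (hq : #|F| = (p ^ m)%N) (h3 : (3 <= h)%N) (hk : (h <= k)%N) :
  let q := #|F| in
  (#|D3 F k h|)%:Q =
    if p == 2%N then
      (if (h <= q.+1)%N then
         (q%:Q) ^+ (k - h) * ((q%:Q) ^+ h - \prod_(i < h) (q%:Q - (i.+1)%:R)) - 1
       else (q%:Q) ^+ k - 1)
    else (q%:Q) ^+ (k - h) * ((q%:Q) ^+ h - Gamma h q) - 1.
Proof.
move=> q; rewrite /q.
have h0 : (0 < h)%N by apply: leq_trans h3.
have chp := card_finPcharP hq hp.
have cD := cardD3 F h0 hk.
set N := #|[set f : {ffun 'I_h -> F} | good f]| in cD.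
have qk : ((#|F|%:R : rat) ^+ k = #|F|%:R ^+ (k - h) * #|F|%:R ^+ h).
  by rewrite -exprD subnK.
have E : (#|D3 F k h|)%:R = (#|F|%:R : rat) ^+ k - 1 - N%:R * #|F|%:R ^+ (k - h).
  have := congr1 (fun x : nat => (x%:R : rat)) cD; rewrite /= !natrD natrM !natrX => <-.
  ring.
rewrite -!pmulrn E.
have q0 : (0 < #|F|)%N by apply/card_gt0P; exists 0.
case: eqP => [p2 | p2].
  subst p.
  have NE := N_char2 h chp.
  rewrite /N NE.
  case: leqP => hq1.
    by rewrite ffact_rat // qk; ring.
  by rewrite ffact_small ?mul0r ?subr0; [rewrite /= | lia].
have t2 : (2%:R : F) != 0.
  rewrite -(dvdn_pcharf chp); apply/negP => /dvdn_leq p2'.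
  by have := prime_gt1 hp; move: p2; lia.
have [P [P0 Pn cP]] := exP t2.
rewrite (gamma_sum (n := #|P|) h0 cP).
have -> : N = (\sum_(s < #|F|.+1) 2 ^ s * 'C(#|P|, s) * nsurj h s)%N.
  rewrite /N N_odd //; apply: eq_bigr => s _.
  by rewrite (count_goodsets P0 Pn).
rewrite qk; ring.
Qed.
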